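(* Let $(\mathcal{A},\mathbf{m})$ be a multiarrangement in $\mathbb{Q}^l$ with $\mathcal{A}=\{H_1,\dots,H_n\}$, $H_i=\alpha_i^{-1}(0)$, where the $\alpha_i\in\mathbb{Z}[x_1,\dots,x_l]$ are linear forms such that no prime number divides any $\alpha_i$. If $(\mathcal{A},\mathbf{m})$ is free with exponents $(e_1,\dots,e_l)$, then for all good primes $p$ except possibly finitely many, the multiarrangement $(\mathcal{A}_p,\mathbf{m})$ in $\mathbb{F}_p^l$ is free with exponents $(e_1,\dots,e_l)$.
   Context: Let $\mathbb{K}$ be a field and $S=\mathbb{K}[x_1,\dots,x_l]$. A multiarrangement $(\mathcal{A},\mathbf{m})$ in $\mathbb{K}^l$ is a finite set $\mathcal{A}=\{H_1,\dots,H_n\}$ of distinct linear hyperplanes $H_i=\alpha_i^{-1}(0)$ ($\alpha_i$ linear forms) together with a map $\mathbf{m}\colon\mathcal{A}\to\mathbb{Z}_{\ge0}$; set $Q(\mathcal{A},\mathbf{m})=\prod_i\alpha_i^{\mathbf{m}(H_i)}$ and $|\mathbf{m}|=\sum_i\mathbf{m}(H_i)$. Its module of logarithmic derivations is $D(\mathcal{A},\mathbf{m})=\{\delta=\sum_j f_j\partial_{x_j}: f_j\in S,\ \delta(\alpha_i)\in\alpha_i^{\mathbf{m}(H_i)}S\ \forall i\}$. A derivation $\sum_j f_j\partial_{x_j}$ is homogeneous of polynomial degree $d$ if all $f_j$ are homogeneous of degree $d$. $(\mathcal{A},\mathbf{m})$ is free with exponents $(e_1,\dots,e_l)$ if $D(\mathcal{A},\mathbf{m})$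 is a free $S$-module with a basis of homogeneous derivations of polynomial degrees $e_1,\dots,e_l$. For a prime $p$, $\pi_p\colon\mathbb{Z}[x_1,\dots,x_l]\to\mathbb{F}_p[x_1,\dots,x_l]$ is reduction mod $p$; $p$ is good for $(\mathcal{A},\mathbf{m})$ if $\pi_p(\alpha_i)\ne\pi_p(\alpha_j)$ for all $i\ne j$. For a good prime $p$, $(\mathcal{A}_p,\mathbf{m})$ is the multiarrangement in $\mathbb{F}_p^l$ with hyperplanes $\pi_p(\alpha_i)^{-1}(0)$, each carrying multiplicity $\mathbf{m}(H_i)$, so $Q(\mathcal{A}_p,\mathbf{m})=\pi_p(Q(\mathcal{A},\mathbf{m}))$. *)

(* Defs.v *)
From HB Require Import structures.
From mathcomp Require Import all_boot all_order all_algebra.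
From mathcomp Require Import mpoly.
Set Implicit Arguments. Unset Strict Implicit. Unset Printing Implicit Defensive.
Import GRing.Theory.
Local Open Scope ring_scope.

Definition linform (K : ringType) (l : nat) (c : 'I_l -> K) : {mpoly K[l]} :=
  \sum_(j < l) c j *: 'X_j.

(* A derivation sum_j f_j d/dx_j is represented by its coefficient family f.
   Its action on a linear form sum_j c_j x_j is sum_j c_j f_j. *)
Definition der_lin (K : ringType) (l : nat) (f : 'I_l -> {mpoly K[l]})
  (c : 'I_l -> K) : {mpoly K[l]} :=
  \sum_(j < l) c j *: f j.

Definition in_logder (K : ringType) (l n : nat) (a : 'I_n -> 'I_l -> K)
  (m : 'I_n -> nat) (f : 'I_l -> {mpoly K[l]}) : Prop :=
  forall i : 'I_n, exists g : {mpoly K[l]},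
    der_lin f (a i) = (linform (a i)) ^+ (m i) * g.

Definition homog_der (K : ringType) (l : nat) (d : nat)
  (f : 'I_l -> {mpoly K[l]}) : Prop :=
  forall j : 'I_l, f j \is d.-homog.

Definition free_with_exponents (K : ringType) (l n : nat)
  (a : 'I_n -> 'I_l -> K) (m : 'I_n -> nat) (e : 'I_l -> nat) : Prop :=
  exists theta : 'I_l -> 'I_l -> {mpoly K[l]},
    (forall k, in_logder a m (theta k)) /\
    (forall k, homog_der (e k) (theta k)) /\
    (forall f : 'I_l -> {mpoly K[l]}, in_logder a m f ->
       exists g : 'I_l -> {mpoly K[l]},
         forall j, f j = \sum_(k < l) g k * theta k j) /\
    (forall g : 'I_l -> {mpoly K[l]},
       (forall j, \sum_(k < l) g k * theta k j = 0) -> forall k, g k = 0).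

Definition red_mod (p l : nat) (c : 'I_l -> int) : 'I_l -> 'F_p :=
  fun j => (c j)%:~R.

Definition good_prime (l n : nat) (a : 'I_n -> 'I_l -> int) (p : nat) : Prop :=
  forall i j : 'I_n, i != j -> red_mod p (a i) <> red_mod p (a j).

(* Main.v *)
Require Import Defs.
From HB Require Import structures.
From mathcomp Require Import all_boot all_order all_algebra.
From mathcomp Require Import mpoly.
From mathcomp Require Import ring zify.
From Stdlib Require Import FunctionalExtensionality.
Set Implicit Arguments. Unset Strict Implicit. Unset Printing Implicit Defensive.
Import GRing.Theory.
Local Open Scope ring_scope.

Definition cong (R : comRingType) (al x y : R) := exists q, x - y = al * q.

Lemma cong_refl (R : comRingType) (al x : R) : cong al x x.
Proof. by exists 0; rewrite subrr mulr0. Qed.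

Lemma congD (R : comRingType) (al x y x' y' : R) :
  cong al x y -> cong al x' y' -> cong al (x + x') (y + y').
Proof. by move=> [q Hq] [q' Hq']; exists (q + q'); rewrite mulrDr -Hq -Hq'; ring. Qed.

Lemma congM (R : comRingType) (al x y x' y' : R) :
  cong al x y -> cong al x' y' -> cong al (x * x') (y * y').
Proof.
move=> [q Hq] [q' Hq']; exists (x * q' + q * y').
have -> : x * x' - y * y' = x * (x' - y') + (x - y) * y' by ring.
by rewrite Hq Hq'; ring.
Qed.

Lemma congX (R : comRingType) (al x y : R) k :
  cong al x y -> cong al (x ^+ k) (y ^+ k).
Proof.
move=> H; elim: k => [|k IH]; first by rewrite !expr0; apply: cong_refl.
by rewrite !exprS; apply: congM.
Qed.

Lemma cong_prod (R : comRingType) (al : R) (I : Type) (r : seq I) (P : pred I) F G :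
  (forall i, P i -> cong al (F i) (G i)) ->
  cong al (\prod_(i <- r | P i) F i) (\prod_(i <- r | P i) G i).
Proof.
move=> H; apply: (big_ind2 (cong al)) => //; first exact: cong_refl.
by move=> ? ? ? ?; apply: congM.
Qed.

Lemma cong_sum (R : comRingType) (al : R) (I : Type) (r : seq I) (P : pred I) F G :
  (forall i, P i -> cong al (F i) (G i)) ->
  cong al (\sum_(i <- r | P i) F i) (\sum_(i <- r | P i) G i).
Proof.
move=> H; apply: (big_ind2 (cong al)) => //; first exact: cong_refl.
by move=> ? ? ? ?; apply: congD.
Qed.

Lemma comp_cong (F : comRingType) l (al : {mpoly F[l]}) (lq : l.-tuple {mpoly F[l]}) :
  (forall j, cong al 'X_j (tnth lq j)) -> forall p, cong al p (p \mPo lq).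
Proof.
move=> H p; rewrite {1}(mpolyE p) comp_mpolyE.
have Hs : forall c (x y : {mpoly F[l]}), cong al x y -> cong al (c *: x) (c *: y).
  move=> c x y [q Hq]; exists (c *: q); rewrite -scalerBr Hq.
  by rewrite -!mul_mpolyC; ring.
apply: cong_sum => m _; rewrite mpolyXE_id.
apply: Hs; apply: cong_prod => i _; exact: congX.
Qed.

Definition sig_tuple (F : fieldType) l (c : 'I_l -> F) (j0 : 'I_l) : l.-tuple {mpoly F[l]} :=
  [tuple 'X_j - ((j == j0)%:R * (c j0)^-1) *: linform c | j < l].

Definition sigma (F : fieldType) l (c : 'I_l -> F) (j0 : 'I_l) (p : {mpoly F[l]}) :=
  p \mPo sig_tuple c j0.

Lemma linform_coef (F : fieldType) l (c : 'I_l -> F) j : (linform c)@_U_(j) = c j.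
Proof.
rewrite /linform raddf_sum (bigD1 j) //= big1 ?addr0.
  by rewrite mcoeffZ mcoeffXU eqxx mulr1.
by move=> k /negbTE kj; rewrite mcoeffZ mcoeffXU kj mulr0.
Qed.

Lemma linform_neq0 (F : fieldType) l (c : 'I_l -> F) j : c j != 0 -> linform c != 0.
Proof. by move=> H; apply: contraNneq H => E; rewrite -linform_coef E mcoeff0. Qed.

Lemma linformB (F : fieldType) l (x y : 'I_l -> F) k :
  linform (fun j => x j - k * y j) = linform x - k *: linform y.
Proof.
rewrite /linform scaler_sumr -sumrB; apply: eq_bigr => j _.
by rewrite scalerBl scalerA.
Qed.

Lemma sigma_linform (F : fieldType) l (c b : 'I_l -> F) j0 :
  sigma c j0 (linform b) = linform (fun j => b j - b j0 * (c j0)^-1 * c j).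
Proof.
rewrite linformB /sigma /linform raddf_sum /=.
rewrite (eq_bigr (fun j => b j *: 'X_j - (b j * ((j == j0)%:R * (c j0)^-1)) *: linform c)); last first.
  move=> j _; rewrite comp_mpolyZ comp_mpolyXU -tnth_nth tnth_mktuple.
  by rewrite scalerBr scalerA.
rewrite sumrB; congr (_ - _).
rewrite -scaler_suml (bigD1 j0) //= big1 ?addr0; first by rewrite eqxx mul1r.
idtac.
by move=> j /negbTE ->; rewrite mul0r mulr0.
Qed.

Lemma sigma_self (F : fieldType) l (c : 'I_l -> F) j0 : c j0 != 0 ->
  sigma c j0 (linform c) = 0.
Proof.
move=> H; rewrite sigma_linform /linform big1 // => j _.
by rewrite divff // mul1r subrr scale0r.
Qed.

Lemma sigma_cong (F : fieldType) l (c : 'I_l -> F) j0 p :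
  cong (linform c) p (sigma c j0 p).
Proof.
apply: comp_cong => j; rewrite tnth_mktuple.
exists (((j == j0)%:R * (c j0)^-1)%:MP).
by rewrite opprB addrC subrK [RHS]mulrC mul_mpolyC.
Qed.

Lemma sigma_dvd (F : fieldType) l (c : 'I_l -> F) j0 p :
  sigma c j0 p = 0 -> exists q, p = linform c * q.
Proof. by case: (sigma_cong c j0 p) => q Hq E; exists q; rewrite -Hq E subr0. Qed.

Lemma sigmaM (F : fieldType) l (c : 'I_l -> F) j0 p q :
  sigma c j0 (p * q) = sigma c j0 p * sigma c j0 q.
Proof. exact: rmorphM. Qed.

Lemma sigmaX (F : fieldType) l (c : 'I_l -> F) j0 p k :
  sigma c j0 (p ^+ k) = sigma c j0 p ^+ k.
Proof. exact: rmorphXn. Qed.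

Lemma sigma_prod (F : fieldType) l (c : 'I_l -> F) j0 (I : Type) (r : seq I) (P : pred I) G :
  sigma c j0 (\prod_(i <- r | P i) G i) = \prod_(i <- r | P i) sigma c j0 (G i).
Proof. exact: rmorph_prod. Qed.

Lemma peel (F : fieldType) l (c : 'I_l -> F) j0 (P : {mpoly F[l]}) : c j0 != 0 ->
  sigma c j0 P != 0 -> forall t E q, P * E = linform c ^+ t * q ->
  exists q', E = linform c ^+ t * q'.
Proof.
move=> Hc HP; elim=> [|t IH] E q H; first by exists E; rewrite expr0 mul1r.
have HL := linform_neq0 Hc.
have : sigma c j0 P * sigma c j0 E = 0.
  by rewrite -sigmaM H sigmaM sigmaX sigma_self // expr0n /= mul0r.
move/eqP; rewrite mulf_eq0 (negbTE HP) /= => /eqP /sigma_dvd [E' HE'].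
have H2 : P * E' = linform c ^+ t * q.
  apply: (mulfI HL); rewrite mulrA (mulrC _ P) -mulrA -HE' H exprS; ring.
by case: (IH _ _ H2) => q' Hq'; exists q'; rewrite HE' Hq' exprS mulrA.
Qed.

Lemma det_special (R : comRingType) l (T : 'M[R]_l) j0 :
  (forall k, k != j0 -> T j0 k = 0) ->
  (forall a b, T (lift j0 a) (lift j0 b) = (a == b)%:R) -> \det T = T j0 j0.
Proof.
move=> H1 H2; rewrite (expand_det_row T j0) (bigD1 j0) //= big1 ?addr0; last first.
  by move=> k /H1 ->; rewrite mul0r.
rewrite /cofactor.
have -> : row' j0 (col' j0 T) = 1%:M.
  by apply/matrixP => a b; rewrite !mxE H2.
by rewrite det1 mulr1 addnn -signr_odd odd_double expr0 mulr1.
Qed.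

Lemma L_dvd_det (F : fieldType) l (c : 'I_l -> F) j0 (M : 'M[{mpoly F[l]}]_l)
  (L : {mpoly F[l]}) t (g : 'I_l -> {mpoly F[l]}) : c j0 != 0 ->
  (forall k, \sum_j c j *: M k j = L ^+ t * g k) -> exists q, \det M = L ^+ t * q.
Proof.
move=> Hc Hg.
pose T := \matrix_(j, k) (if k == j0 then (c j)%:MP else (j == k)%:R) : 'M[{mpoly F[l]}]_l.
pose N := \matrix_(k, j) (if j == j0 then g k else M k j) : 'M[{mpoly F[l]}]_l.
pose d := \row_j (if j == j0 then L ^+ t else 1) : 'rV[{mpoly F[l]}]_l.
have HT : \det T = (c j0)%:MP.
  rewrite (@det_special _ _ _ j0).
  - by rewrite mxE eqxx.
  - by move=> k /negbTE kj; rewrite mxE kj eq_sym kj.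
  - by move=> a b; rewrite mxE eq_sym (negbTE (neq_lift _ _)) (inj_eq (@lift_inj _ j0)).
have HMT : M *m T = N *m diag_mx d.
  rewrite mul_mx_diag; apply/matrixP => k j; rewrite !mxE.
  case: ifP => [/eqP -> | jj].
    rewrite mulrC -Hg; apply: eq_bigr => i _; rewrite mxE eqxx.
    by rewrite mulrC mul_mpolyC.
  rewrite mulr1 (bigD1 j) //= big1 ?addr0; first by rewrite mxE jj eqxx mulr1.
  by move=> i ij; rewrite mxE jj (negbTE ij) mulr0.
have Hd : \det (diag_mx d) = L ^+ t.
  rewrite det_diag (bigD1 j0) //= big1 ?mulr1; first by rewrite mxE eqxx.
  by move=> j /negbTE jj; rewrite mxE jj.
exists (\det N * ((c j0)^-1)%:MP).
have := congr1 determinant HMT; rewrite !det_mulmx HT Hd => E.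
transitivity (\det M * (c j0)%:MP * ((c j0)^-1)%:MP).
  by rewrite -mulrA -mpolyCM divff // mulr1.
by rewrite E; ring.
Qed.

Definition Qm (F : fieldType) l n (a : 'I_n -> 'I_l -> F) (m : 'I_n -> nat) : {mpoly F[l]} :=
  \prod_(i < n) linform (a i) ^+ m i.

Definition nonprop (F : fieldType) l n (a : 'I_n -> 'I_l -> F) :=
  forall i k, i != k -> forall c, exists j, a k j != c * a i j.

Lemma sigma_other (F : fieldType) l n (a : 'I_n -> 'I_l -> F) piv i k :
  nonprop a -> i != k -> sigma (a i) (piv i) (linform (a k)) != 0.
Proof.
move=> Hnp ik; rewrite sigma_linform.
case: (Hnp i k ik (a k (piv i) * (a i (piv i))^-1)) => j Hj.
by apply: (linform_neq0 (j := j)); rewrite subr_eq0.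
Qed.

Lemma Q_dvd_seq (F : fieldType) l n (a : 'I_n -> 'I_l -> F) (m : 'I_n -> nat) piv
  (D : {mpoly F[l]}) (s : seq 'I_n) :
  (forall i, a i (piv i) != 0) -> nonprop a -> uniq s ->
  (forall i, exists q, D = linform (a i) ^+ m i * q) ->
  exists q, D = \prod_(i <- s) linform (a i) ^+ m i * q.
Proof.
move=> Hpiv Hnp; elim: s => [|x s IH] /=.
  by move=> _ _; exists D; rewrite big_nil mul1r.
move=> /andP [xs us] HD; case: (IH us HD) => E HE.
case: (HD x) => q Hq.
have Hs : sigma (a x) (piv x) (\prod_(i <- s) linform (a i) ^+ m i) != 0.
  rewrite sigma_prod prodf_seq_neq0; apply/allP => i is_ /=.
  rewrite sigmaX expf_neq0 //; apply: sigma_other => //.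
  by apply: contraNneq xs => ->.
have := @peel _ _ (a x) (piv x) _ (Hpiv x) Hs (m x) E q.
rewrite -HE -Hq => /(_ erefl) [q' Hq']; exists q'.
by rewrite big_cons HE Hq' mulrCA mulrA.
Qed.

Lemma Q_dvd (F : fieldType) l n (a : 'I_n -> 'I_l -> F) (m : 'I_n -> nat) piv
  (D : {mpoly F[l]}) :
  (forall i, a i (piv i) != 0) -> nonprop a ->
  (forall i, exists q, D = linform (a i) ^+ m i * q) ->
  exists q, D = Qm a m * q.
Proof. by move=> H1 H2 H3; apply: (Q_dvd_seq (piv := piv)) => //; apply: index_enum_uniq. Qed.

Lemma Qm_neq0 (F : fieldType) l n (a : 'I_n -> 'I_l -> F) (m : 'I_n -> nat) piv :
  (forall i, a i (piv i) != 0) -> Qm a m != 0.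
Proof.
move=> Hpiv; apply/prodf_neq0 => i _; rewrite expf_neq0 //.
exact: (linform_neq0 (Hpiv i)).
Qed.

Lemma Qm_split (F : fieldType) l n (a : 'I_n -> 'I_l -> F) (m : 'I_n -> nat) i :
  Qm a m = linform (a i) ^+ m i * \prod_(k < n | k != i) linform (a k) ^+ m k.
Proof. by rewrite /Qm (bigD1 i). Qed.

Lemma rows_Q_dvd (F : fieldType) l n (a : 'I_n -> 'I_l -> F) (m : 'I_n -> nat) piv
  (M : 'M[{mpoly F[l]}]_l) :
  (forall i, a i (piv i) != 0) -> nonprop a ->
  (forall k, in_logder a m (fun j => M k j)) -> exists q, \det M = Qm a m * q.
Proof.
move=> Hpiv Hnp HM; apply: (Q_dvd (piv := piv)) => // i.
have /fin_all_exists [g Hg] : forall k, exists g, der_lin (fun j => M k j) (a i) = linform (a i) ^+ m i * g.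
  by move=> k; apply: HM.
exact: (L_dvd_det (Hpiv i) Hg).
Qed.

Lemma saito_indep (F : fieldType) l (M : 'M[{mpoly F[l]}]_l) (g : 'I_l -> {mpoly F[l]}) :
  \det M != 0 -> (forall j, \sum_k g k * M k j = 0) -> forall k, g k = 0.
Proof.
move=> HD Hg k.
pose gr := \row_k g k : 'rV[{mpoly F[l]}]_l.
have H0 : gr *m M = 0.
  apply/matrixP => i j; rewrite mxE [RHS]mxE; rewrite -[RHS](Hg j); apply: eq_bigr => r _; rewrite mxE //.
have := congr1 (fun X => X *m \adj M) H0; rewrite -mulmxA mul_mx_adj mul0mx mul_mx_scalar.
move/matrixP => /(_ 0 k); rewrite !mxE => /eqP; rewrite mulf_eq0 (negbTE HD) /=.
by move/eqP.
Qed.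

Lemma saito_gen (F : fieldType) l n (a : 'I_n -> 'I_l -> F) (m : 'I_n -> nat) piv
  (M : 'M[{mpoly F[l]}]_l) (u : F) :
  (forall i, a i (piv i) != 0) -> nonprop a ->
  (forall k, in_logder a m (fun j => M k j)) -> u != 0 -> \det M = Qm a m * u%:MP ->
  forall f, in_logder a m f -> exists g, forall j, f j = \sum_k g k * M k j.
Proof.
move=> Hpiv Hnp HM Hu HD f Hf.
pose Mk k := \matrix_(r, j) (if r == k then f j else M r j) : 'M[{mpoly F[l]}]_l.
have Hdk : forall k, exists h, \det (Mk k) = Qm a m * h.
  move=> k; apply: (rows_Q_dvd (piv := piv)) => // r.
  case: (eqVneq r k) => [-> | rk].
    by rewrite /in_logder => i; case: (Hf i) => q Hq; exists q; rewrite -Hq /der_lin; apply: eq_bigr => j _; rewrite mxE eqxx.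
  rewrite /in_logder => i; case: (HM r i) => q Hq; exists q; rewrite -Hq /der_lin; apply: eq_bigr => j _.
  by rewrite mxE (negbTE rk).
have /fin_all_exists [h Hh] := Hdk.
have Hexp : forall k, \det (Mk k) = \sum_j f j * cofactor M k j.
  move=> k; rewrite (expand_det_row _ k); apply: eq_bigr => j _.
  rewrite mxE eqxx; congr (_ * _); rewrite /cofactor; congr (_ * _); congr determinant.
  by apply/matrixP => x y; rewrite !mxE eq_sym (negbTE (neq_lift _ _)).
pose fr := \row_j f j : 'rV[{mpoly F[l]}]_l.
have Hcr : forall j, \sum_k \det (Mk k) * M k j = \det M * f j.
  move=> j.
  have := congr1 (fun X : 'M_(1, l) => X 0 j) (mulmxA fr (\adj M) M).
  rewrite mul_adj_mx mul_mx_scalar [X in X = _ -> _]mxE [X in _ * X = _ -> _]mxE => ->.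
  rewrite mxE; apply: eq_bigr => k _; rewrite Hexp mxE; congr (_ * _).
  by apply: eq_bigr => j' _; rewrite !mxE.
exists (fun k => u^-1%:MP * h k) => j.
have HQ := Qm_neq0 m Hpiv.
apply: (mulfI HQ); apply: (mulfI (_ : u%:MP != 0)); first by rewrite mpolyC_eq.
rewrite mulrA (mulrC _ (Qm a m)) -HD -Hcr mulr_sumr mulr_sumr; apply: eq_bigr => k _.
rewrite Hh; transitivity (Qm a m * h k * M k j * (u * u^-1)%:MP); last by rewrite mpolyCM; ring.
by rewrite divff // mulr1.
Qed.

Lemma peel_seq (F : fieldType) l n (a : 'I_n -> 'I_l -> F) piv (t : 'I_n -> nat)
  (h : {mpoly F[l]}) (s : seq 'I_n) :
  (forall i, a i (piv i) != 0) ->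
  (forall i, sigma (a i) (piv i) h != 0) ->
  forall E, h * E = \prod_(i <- s) linform (a i) ^+ t i -> exists E', h * E' = 1.
Proof.
move=> Hpiv Hh; elim: s => [|x s IH] E HE; first by exists E; rewrite HE big_nil.
rewrite big_cons in HE.
case: (peel (Hpiv x) (Hh x) HE) => q Hq.
apply: (IH q); apply: (mulfI (_ : linform (a x) ^+ t x != 0)).
  by rewrite expf_neq0 // (linform_neq0 (Hpiv x)).
by rewrite -HE Hq; ring.
Qed.

Lemma unit_const (F : fieldType) l (h E : {mpoly F[l]}) : h * E = 1 ->
  exists u, u != 0 /\ h = u%:MP.
Proof.
move=> H; have : h \in @mpoly_unit l F by apply: (@mpoly_intro_unit _ _ _ E); rewrite mulrC.
by case/andP => /eqP H1 H2; exists h@_0; split => //; rewrite -unitfE.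
Qed.

Lemma sigma_h (F : fieldType) l n (a : 'I_n -> 'I_l -> F) m piv (M : 'M[{mpoly F[l]}]_l)
  (h : {mpoly F[l]}) i :
  (forall i, a i (piv i) != 0) -> nonprop a ->
  (forall f, in_logder a m f -> exists g, forall j, f j = \sum_k g k * M k j) ->
  \det M = Qm a m * h -> sigma (a i) (piv i) h != 0.
Proof.
move=> Hpiv Hnp Hgen HD.
move: (piv i) (Hpiv i) => j0 Hj0.
pose Q' := \prod_(k < n | k != i) linform (a k) ^+ m k.
pose T := \matrix_(j, k) (if j == j0 then (k == j0)%:R
           else (j == k)%:R - (k == j0)%:R * (a i j / a i j0)%:MP) : 'M[{mpoly F[l]}]_l.
pose d := \row_j (if j == j0 then Qm a m else Q') : 'rV[{mpoly F[l]}]_l.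
pose Phi := diag_mx d *m T.
have HT : \det T = 1.
  rewrite (@det_special _ _ _ j0).
  - by rewrite mxE eqxx.
  - by move=> k /negbTE kj; rewrite mxE eqxx kj.
  - move=> x y; rewrite mxE eq_sym (negbTE (neq_lift j0 x)) (inj_eq (@lift_inj _ j0)).
    by rewrite [lift j0 y == j0]eq_sym (negbTE (neq_lift j0 y)) mul0r subr0.
have HdPhi : \det Phi = Qm a m * \prod_(j | j != j0) Q'.
  rewrite det_mulmx HT mulr1 det_diag (bigD1 j0) //= mxE eqxx; congr (_ * _).
  by apply: eq_bigr => j /negbTE jj; rewrite mxE jj.
have Hrow : forall j, in_logder a m (fun k => Phi j k).
  move=> j i'.
  have E1 : der_lin (fun k => Phi j k) (a i') = d 0 j * \sum_k a i' k *: T j k.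
    rewrite /der_lin mulr_sumr; apply: eq_bigr => k _.
    by rewrite /Phi mul_diag_mx mxE -scalerAr.
  rewrite E1 mxE.
  case: (eqVneq j j0) => [jj | jj].
    by rewrite jj (Qm_split a m i'); exists (\prod_(k < n | k != i') linform (a k) ^+ m k * \sum_k a i' k *: T j0 k); ring.
  case: (eqVneq i' i) => [ii | ii].
    exists 0; rewrite mulr0; apply/eqP; rewrite mulf_eq0; apply/orP; right.
    rewrite (bigD1 j) //= (bigD1 j0 (_ : j0 != j)) 1?eq_sym //= big1.
      rewrite /T !mxE !ifN // (eqxx j0) (negbTE jj) eqxx ii /=.
      rewrite mul0r subr0 mul1r sub0r addr0 scalerN -!mul_mpolyC -mpolyCM mulr1.
      by rewrite mulrCA mulfV // mulr1 subrr.
    move=> k /andP [kj kj0]; rewrite /T mxE ifN // (negbTE kj0) (eq_sym j k) (negbTE kj).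
    by rewrite mul0r subr0 scaler0.
  rewrite /Q' (bigD1 i') //=.
  by exists (\prod_(k < n | (k != i) && (k != i')) linform (a k) ^+ m k * \sum_k a i' k *: T j k); ring.
have /fin_all_exists [G HG] : forall j, exists g, forall k, Phi j k = \sum_r g r * M r k.
  by move=> j; apply: Hgen.
have HGM : Phi = (\matrix_(j, r) G j r) *m M.
  by apply/matrixP => j k; rewrite HG mxE; apply: eq_bigr => r _; rewrite mxE.
have := congr1 determinant HGM; rewrite HdPhi det_mulmx HD.
rewrite mulrCA => /(mulfI (Qm_neq0 m Hpiv)) H.
have := congr1 (sigma (a i) j0) H; rewrite sigmaM sigma_prod => E.
apply/eqP => Hs; move: E; rewrite Hs mulr0; apply/eqP/prodf_neq0 => j _.
rewrite /Q' sigma_prod; apply/prodf_neq0 => k ki.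
by rewrite sigmaX expf_neq0 // sigma_other // eq_sym.
Qed.

Lemma free_det (F : fieldType) l n (a : 'I_n -> 'I_l -> F) m piv (M : 'M[{mpoly F[l]}]_l) :
  (forall i, a i (piv i) != 0) -> nonprop a ->
  (forall k, in_logder a m (fun j => M k j)) ->
  (forall f, in_logder a m f -> exists g, forall j, f j = \sum_k g k * M k j) ->
  exists u, u != 0 /\ \det M = Qm a m * u%:MP.
Proof.
move=> Hpiv Hnp HM Hgen.
case: (rows_Q_dvd Hpiv Hnp HM) => h Hh.
have Hf : forall j, exists g, forall j', (j' == j)%:R * Qm a m = \sum_k g k * M k j'.
  move=> j; apply: Hgen => i.
  exists (a i j *: \prod_(k < n | k != i) linform (a k) ^+ m k).
  rewrite /der_lin (bigD1 j) //= big1 ?addr0; last first.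
    by move=> k /negbTE ->; rewrite mul0r scaler0.
  by rewrite eqxx mul1r (Qm_split a m i) -scalerAr.
have /fin_all_exists [G HG] := Hf.
have HGM : (Qm a m)%:M = (\matrix_(j, k) G j k) *m M.
  apply/matrixP => j j'; rewrite !mxE.
  transitivity (\sum_k G j k * M k j'); last by apply: eq_bigr => k _; rewrite mxE.
  by rewrite -HG eq_sym mulr_natl.
have := congr1 determinant HGM; rewrite det_scalar det_mulmx Hh => E.
have Hs : forall i, sigma (a i) (piv i) h != 0.
  by move=> i; exact: (sigma_h i Hpiv Hnp Hgen Hh).
have [E' HE'] : exists E', h * E' = 1.
  apply: (@peel_seq _ _ _ a piv (fun i => (m i * l)%N) h (index_enum 'I_n) Hpiv Hs
           (\det (\matrix_(j, k) G j k) * Qm a m)).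
  rewrite (eq_bigr (fun i => (linform (a i) ^+ m i) ^+ l)); last by move=> i _; rewrite exprM.
  by rewrite prodrXl -/(Qm a m) E; ring.
case: (unit_const HE') => u [Hu Hhu]; exists u; split => //.
by rewrite Hhu.
Qed.

Lemma clear_den l (P : {mpoly rat[l]}) : exists d : int, d != 0 /\
  exists P' : {mpoly int[l]}, map_mpoly (intr : int -> rat) P' = d%:~R *: P.
Proof.
elim/mpolyind: P => [|c m P _ _ [d [Hd [P' HP']]]].
  by exists 1; split => //; exists 0; rewrite raddf0 scaler0.
exists (d * denq c); split; first by rewrite mulf_neq0 // denq_neq0.
exists ((d * numq c) *: 'X_[m] + denq c *: P').
rewrite raddfD /= !map_mpolyZ map_mpolyX HP' scalerDr !scalerA; congr (_ + _).
  by rewrite !rmorphM /= numqE; congr (_ *: _); ring.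
by rewrite !rmorphM /= mulrC.
Qed.

Lemma clear_den_seq l (s : seq {mpoly rat[l]}) : exists d : int, d != 0 /\
  forall P, P \in s -> exists P' : {mpoly int[l]}, map_mpoly (intr : int -> rat) P' = d%:~R *: P.
Proof.
elim: s => [|x s [d [Hd IH]]]; first by exists 1; split.
case: (clear_den x) => d1 [Hd1 [x' Hx']].
exists (d * d1); split; first by rewrite mulf_neq0.
move=> P; rewrite inE => /orP [/eqP -> | Ps].
  exists (d *: x'); rewrite map_mpolyZ Hx' scalerA; congr (_ *: _).
  by rewrite rmorphM.
case: (IH P Ps) => P' HP'; exists (d1 *: P'); rewrite map_mpolyZ HP' scalerA; congr (_ *: _).
by rewrite rmorphM mulrC.
Qed.

Lemma clear_den_fam l (I : finType) (P : I -> {mpoly rat[l]}) : exists d : int, d != 0 /\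
  exists P' : I -> {mpoly int[l]}, forall i, map_mpoly (intr : int -> rat) (P' i) = d%:~R *: P i.
Proof.
case: (clear_den_seq [seq P i | i <- enum I]) => d [Hd H].
exists d; split => //.
have H' : forall i, exists P', map_mpoly (intr : int -> rat) P' = d%:~R *: P i.
  by move=> i; apply: H; apply: map_f; rewrite mem_enum.
exact: fin_all_exists H'.
Qed.

Lemma map_linform (R S : comRingType) (f : {rmorphism R -> S}) l (c : 'I_l -> R) :
  map_mpoly f (linform c) = linform (fun j => f (c j)).
Proof.
rewrite /linform raddf_sum; apply: eq_bigr => j _.
by rewrite /= map_mpolyZ map_mpolyX.
Qed.

Lemma map_homog (R S : ringType) (f : {additive R -> S}) l d (P : {mpoly R[l]}) :
  P \is d.-homog -> map_mpoly f P \is d.-homog.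
Proof.
move=> /dhomogP H; apply/dhomogP => m; rewrite mcoeff_msupp mcoeff_map_mpoly => Hm.
apply: H; rewrite mcoeff_msupp; apply: contraNneq Hm => ->; by rewrite raddf0.
Qed.

Lemma inj_homog (R S : ringType) (f : {rmorphism R -> S}) l d (P : {mpoly R[l]}) :
  injective f -> map_mpoly f P \is d.-homog -> P \is d.-homog.
Proof.
move=> inj /dhomogP H; apply/dhomogP => m Hm; apply: H.
by rewrite (perm_mem (msupp_map_mpoly P inj)).
Qed.

Lemma map_inj (R S : ringType) (f : {rmorphism R -> S}) l :
  injective f -> injective (@map_mpoly l R S f).
Proof.
move=> inj P Q E; apply/mpolyP => m; apply: inj.
by rewrite -!mcoeff_map_mpoly E.
Qed.

Lemma Fp_neq0 p (z : int) : prime p -> z != 0 -> (`|z| < p)%N -> (z%:~R : 'F_p) != 0.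
Proof.
move=> pp Hz Hlt; rewrite -(dvdz_pcharf (pchar_Fp pp)).
apply/negP => /dvdn_leq; rewrite absz_gt0 Hz => /(_ erefl) H.
by move: (leq_ltn_trans H Hlt); rewrite ltnn.
Qed.

Unset Implicit Arguments.

Theorem theorem3p3 (l n : nat) (a : 'I_n -> 'I_l -> int) (m : 'I_n -> nat)
  (e : 'I_l -> nat) :
  (* no prime number divides any alpha_i *)
  (forall (i : 'I_n) (p : nat), prime p -> exists j : 'I_l, ~~ (p%:Z %| a i j)%Z) ->
  (* the hyperplanes H_i = alpha_i^{-1}(0) in Q^l are pairwise distinct *)
  (forall i j : 'I_n, i != j ->
     forall c : rat, (fun k => (a i k)%:~R : rat) <> (fun k => c * (a j k)%:~R)) ->
  free_with_exponents (fun i k => (a i k)%:~R : rat) m e ->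
  exists bad : seq nat, forall p : nat, prime p -> p \notin bad ->
    good_prime a p ->
    free_with_exponents (fun i k => (a i k)%:~R : 'F_p) m e.
Proof.
move=> Hprim Hdist [th [Hrow [Hhom [Hgen Hind]]]].
set aQ := (fun i k => (a i k)%:~R : rat).
have /fin_all_exists [pivQ HpivQ] : forall i, exists j, a i j != 0.
  move=> i; case: (Hprim i 2%N erefl) => j Hj; exists j.
  by apply: contraNneq Hj => ->; rewrite dvdz0.
have HpivQ' : forall i, aQ i (pivQ i) != 0 by move=> i; rewrite /aQ intr_eq0.
have HnpQ : nonprop aQ.
  move=> i k ik c.
  case: (boolP [exists j, aQ k j != c * aQ i j]) => [/existsP // | /existsPn H].
  exfalso; apply: (Hdist k i _ c); first by rewrite eq_sym.
  by apply: functional_extensionality => j; apply/eqP; move: (H j); rewrite negbK.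
pose M := \matrix_(k, j) th k j : 'M[{mpoly rat[l]}]_l.
have HMk : forall k, (fun j => M k j) = th k.
  by move=> k; apply: functional_extensionality => j; rewrite mxE.
have [u [Hu HdetM]] : exists u, u != 0 /\ \det M = Qm aQ m * u%:MP.
  apply: (free_det HpivQ' HnpQ) => [k | f Hf]; first by rewrite HMk.
  by case: (Hgen f Hf) => g Hg; exists g => j; rewrite Hg; apply: eq_bigr => k _; rewrite mxE.
have [dT [HdT [Th HTh]]] := clear_den_fam (fun kj : 'I_l * 'I_l => th kj.1 kj.2).
have /fin_all_exists [gf Hgf] : forall ik : 'I_n * 'I_l,
    exists g, der_lin (th ik.2) (aQ ik.1) = linform (aQ ik.1) ^+ m ik.1 * g.
  by move=> ik; apply: Hrow.
have [dg [Hdg [Ga HGa]]] := clear_den_fam gf.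
have injQ : injective (@map_mpoly l _ _ (intr : int -> rat)) by apply: map_inj; apply: intr_inj.
have mQL : forall i, map_mpoly (intr : int -> rat) (linform (a i)) = linform (aQ i).
  by move=> i; rewrite map_linform.
have HrowZ : forall i k, dg *: (\sum_j a i j *: Th (k, j)) =
    linform (a i) ^+ m i * (dT *: Ga (i, k)).
  move=> i k; apply: injQ.
  rewrite rmorphM rmorphXn /= !map_mpolyZ mQL HGa rmorph_sum /=.
  rewrite (eq_bigr (fun j => (dT%:~R : rat) *: (aQ i j *: th k j))); last first.
    by move=> j _; rewrite map_mpolyZ HTh /= !scalerA mulrC.
  rewrite -scaler_sumr; move: (Hgf (i, k)); rewrite /der_lin /= => ->.
  by rewrite -!scalerAr !scalerA mulrC.
pose ThM := \matrix_(k, j) Th (k, j) : 'M[{mpoly int[l]}]_l.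
pose QZ := \prod_(i < n) linform (a i) ^+ m i : {mpoly int[l]}.
have mQQ : map_mpoly (intr : int -> rat) QZ = Qm aQ m.
  by rewrite /QZ rmorph_prod; apply: eq_bigr => i _; rewrite rmorphXn /= mQL.
have HdetZ : denq u *: \det ThM = (dT ^+ l * numq u) *: QZ.
  apply: injQ; rewrite !map_mpolyZ mQQ -det_map_mx.
  have -> : map_mx (map_mpoly (intr : int -> rat)) ThM = ((dT%:~R : rat)%:MP) *: M.
    by apply/matrixP => k j; rewrite !mxE HTh /= mul_mpolyC.
  rewrite detZ HdetM -!mul_mpolyC rmorphM rmorphXn /= numqE.

  by rewrite !mpolyCM [(_ ^+ l)%:MP]rmorphXn; ring.
have /fin_all_exists [J HJ] : forall ik : 'I_n * 'I_n, exists j, ik.1 != ik.2 ->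
    a ik.2 j * a ik.1 (pivQ ik.1) != a ik.2 (pivQ ik.1) * a ik.1 j.
  move=> [i k] /=; case: (eqVneq i k) => [_ | ik]; first by exists (pivQ i).
  case: (HnpQ i k ik (aQ k (pivQ i) / aQ i (pivQ i))) => j Hj; exists j => _.
  apply: contra Hj => /eqP E.
  have E' : aQ k j * aQ i (pivQ i) = aQ k (pivQ i) * aQ i j by rewrite /aQ -!intrM E.
  apply/eqP; apply: (mulIf (HpivQ' i)); rewrite E' mulrAC divfK //.
pose mu (ik : 'I_n * 'I_n) := a ik.2 (J ik) * a ik.1 (pivQ ik.1) - a ik.2 (pivQ ik.1) * a ik.1 (J ik).
pose B := (`|dT| + `|dg| + `|denq u| + `|(dT ^+ l * numq u)%R| + \sum_ik `|mu ik|)%N.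
exists (iota 0 B.+1) => p pp pbad _.
have HpB : (B < p)%N by move: pbad; rewrite mem_iota leq0n add0n /= ltnS -ltnNge.
have bnd : forall z : int, (`|z| <= B)%N -> z != 0 -> (z%:~R : 'F_p) != 0.
  by move=> z H Hz; apply: Fp_neq0 pp Hz (leq_ltn_trans H HpB).
have HdTp : (dT%:~R : 'F_p) != 0 by apply: bnd HdT; rewrite /B; lia.
have Hdgp : (dg%:~R : 'F_p) != 0 by apply: bnd Hdg; rewrite /B; lia.
have Hdenp : ((denq u)%:~R : 'F_p) != 0 by apply: bnd (denq_neq0 u); rewrite /B; lia.
have Hnump : ((dT ^+ l * numq u)%:~R : 'F_p) != 0.
  apply: bnd; first by rewrite /B; lia.
  by rewrite mulf_neq0 ?expf_neq0 ?numq_eq0.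
set ap := (fun i k => (a i k)%:~R : 'F_p).
have /fin_all_exists [pivp Hpivp] : forall i, exists j, ap i j != 0.
  move=> i; case: (Hprim i p pp) => j Hj; exists j.
  by rewrite /ap -(dvdz_pcharf (pchar_Fp pp)).
have Hnpp : nonprop ap.
  move=> i k ik c.
  case: (boolP [exists j, ap k j != c * ap i j]) => [/existsP // | /existsPn H].
  exfalso.
  have Hmu : (mu (i, k))%:~R != 0 :> 'F_p.
    apply: bnd; first by rewrite /B (bigD1 (i, k)) //=; lia.
    by rewrite /mu subr_eq0; apply: (HJ (i, k)).
  move: Hmu; rewrite /mu /= !rmorphB !rmorphM /=.
  have H' : forall x, ap k x = c * ap i x by move=> x; apply/eqP; move: (H x); rewrite negbK.
  by rewrite -!/(ap _ _) !H' /ap; apply/negP; rewrite negbK; apply/eqP; ring.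
pose MP := \matrix_(k, j) map_mpoly (intr : int -> 'F_p) (Th (k, j)) : 'M[{mpoly 'F_p[l]}]_l.
have mPL : forall i, map_mpoly (intr : int -> 'F_p) (linform (a i)) = linform (ap i).
  by move=> i; rewrite map_linform.
have HrowsP : forall k, in_logder ap m (fun j => MP k j).
  move=> k i.
  have := congr1 (map_mpoly (intr : int -> 'F_p)) (HrowZ i k).
  rewrite rmorphM rmorphXn /= !map_mpolyZ mPL rmorph_sum /= => E.
  exists ((dg%:~R : 'F_p)^-1 *: (dT%:~R *: map_mpoly (intr : int -> 'F_p) (Ga (i, k)))).
  rewrite -scalerAr -E scalerA mulVf // scale1r /der_lin; apply: eq_bigr => j _.
  by rewrite mxE map_mpolyZ.
have mPQ : map_mpoly (intr : int -> 'F_p) QZ = Qm ap m.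
  by rewrite /QZ rmorph_prod; apply: eq_bigr => i _; rewrite rmorphXn /= mPL.
have HdetP : \det MP = Qm ap m * ((dT ^+ l * numq u)%:~R / (denq u)%:~R)%:MP.
  have := congr1 (map_mpoly (intr : int -> 'F_p)) HdetZ.
  rewrite !map_mpolyZ mPQ -det_map_mx.
  have -> : map_mx (map_mpoly (intr : int -> 'F_p)) ThM = MP.
    by apply/matrixP => k j; rewrite !mxE.
  move=> E; apply: (@scalerI _ _ ((denq u)%:~R : 'F_p)) => //.
  rewrite E -!mul_mpolyC mulrCA -mpolyCM mulrCA divff // mulr1.
  by rewrite mulrC.
have Hw : ((dT ^+ l * numq u)%:~R / (denq u)%:~R : 'F_p) != 0.
  by rewrite mulf_neq0 // invr_eq0.
have HdetP0 : \det MP != 0.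
  by rewrite HdetP mulf_neq0 ?(Qm_neq0 m Hpivp) // mpolyC_eq.
exists (fun k j => MP k j); split; [|split; [|split]].
- exact: HrowsP.
- move=> k j; rewrite mxE; apply: map_homog.
  apply: (@inj_homog _ _ (intr : int -> rat)); first exact: intr_inj.
  by rewrite HTh /=; apply: dhomogZ; apply: Hhom.
- move=> f Hf; exact: (saito_gen Hpivp Hnpp HrowsP Hw HdetP Hf).
- move=> g Hg; exact: (saito_indep HdetP0 Hg).
Qed.
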